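(* Let $H\Gamma=(C,\{\mathcal W,\mathcal X,\mathcal Y,\mathcal Z\},G_{zx},G_{wy})$ be a Lagrangian hypercube diagram and $L$ the embedded Legendrian torus obtained as the lift of the Lagrangian torus it determines. Then the Maslov number of $L$ equals $2\gcd(w(G_{zx}),w(G_{wy}))$ (a non-negative integer), where $w(G)=\frac14(\#\text{counterclockwise corners of }G-\#\text{clockwise corners of }G)$.
   Context: Grid conventions. In a plane with coordinates $(a,b)$ (below $(a,b)=(w,y)$ or $(a,b)=(z,x)$), an immersed grid diagram of size $n$ is an $n\times n$ grid of unit cells in $[0,n]^2$ with two kinds of markings at centers of cells, each row and each column containing exactly one marking of each kind; joining each marking of the first kind to the marking of the second kind in its row by an $a$-parallel segment, and each marking of the second kind to the marking of the first kind in its column by a $b$-parallel segment, gives an oriented connected closed piecewise-linear curve, with no crossing information, viewed as an immersion $\gamma:\mathbb{R}/2\pi\mathbb{Z}\to\mathbb{R}^2$, $\theta\mapsto(a(\theta),b(\theta))$. It is a Lagrangian grid diagram if (1) $\int_0^{2\pi}b\,a'\,d\theta=0$ and (2) $\int_{\theta_0}^{\theta_1}b\,a'\,d\theta\neq0$ whenever $\theta_0\neq\theta_1$ and $\gamma(\theta_0)=\gamma(\theta_1)$. For a crossing $c=\gamma(\theta_0)=\gamma(\theta_1)$ put $|\Delta t(c)|=|\int_{\theta_0}^{\theta_1}b\,a'\,d\theta|$. The corners are the markings; a corner is counterclockwise (resp. clockwise) if the curve turns left (resp. right) there relative to the orientation of the $(a,b)$-plane. Hypercube diagrams. Let $C=[0,n]^4$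 with coordinates $(w,x,y,z)$. A flat is a product in which two coordinates range over $[0,n]$ and the other two over unit intervals $[k,k+1]$, named by its two full coordinates; a cube is a product in which three coordinates range over $[0,n]$ and one over a unit interval. Markings are points with coordinates in $\mathbb{Z}+\frac12$ labelled $W,X,Y,Z$. Marking conditions: each cube contains exactly one marking of each label; each cube contains exactly two flats containing exactly three markings; in each such flat the three markings form a right angle with rays parallel to coordinate axes; its vertex is $W$ iff the flat is a $zw$-flat, $X$ iff a $wx$-flat, $Y$ iff an $xy$-flat, $Z$ iff a $yz$-flat. Join each $W$ to an $X$ by a $w$-parallel segment, each $X$ to a $Y$ by an $x$-parallel segment, each $Y$ to a $Z$ by a $y$-parallel segment and each $Z$ to a $W$ by a $z$-parallel segment; the projections of this curve to the $(w,y)$- and $(z,x)$-planes are immersed grid diagrams $G_{wy}$ ($(a,b)=(w,y)$) and $G_{zx}$ ($(a,b)=(z,x)$). $H\Gamma$ is a Lagrangian hypercube diagram if the marking conditions hold, $G_{wy},G_{zx}$ are Lagrangian grid diagrams, and $|\Delta t(c)|\neq|\Delta t(c')|$ for all crossings $c$ of $G_{zx}$ and $c'$ of $G_{wy}$. Torus and lift. With $G_{zx}$ parametrized by $s\mapsto(z(s),x(s))$ and $G_{wy}$ by $u\mapsto(w(u),y(u))$ (corners slightly smoothed preserving (1),(2)), the torus is $i(s,u)=(w(u),x(s),y(u),z(s))$, Lagrangian for $\omega=dw\wedge dy+dz\wedge dx$. In $\mathbb{R}^5$ with coordinates $(w,x,y,z,t)$ and contact form $dt-y\,dw-x\,dz$,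 the lift is $L=\{(i(p),t(p))\}$, $t(p)=t_0+\int_\gamma(y\,dw+x\,dz)$ along a path from a base point to $p$. The Maslov index of a loop is the Maslov index of the loop of (unoriented) Lagrangian tangent planes of $i$ along it. The Maslov number of $L$ is the smallest positive integer that is the Maslov index of some loop in $L$, and $0$ if every loop has Maslov index $0$; here $\gcd(0,0)=0$. *)

(* Defs.v *)
From Stdlib Require Import Reals Lra List ZArith Permutation Bool.
From Coquelicot Require Import Coquelicot.
Import ListNotations.
Open Scope R_scope.
Local Open Scope bool_scope.

Inductive axis := AW | AX | AY | AZ.
Inductive label := LW | LX | LY | LZ.

Definition axis_eqb (a b : axis) : bool :=
  match a, b with
  | AW, AW | AX, AX | AY, AY | AZ, AZ => true
  | _, _ => false
  end.

Definition label_eqb (a b : label) : bool :=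
  match a, b with
  | LW, LW | LX, LX | LY, LY | LZ, LZ => true
  | _, _ => false
  end.

(* A marking position: the point whose coordinates (w,x,y,z) are
   (k_w + 1/2, k_x + 1/2, k_y + 1/2, k_z + 1/2); it lies in C = [0,n]^4 iff all
   k_* < n. *)
Record pt : Type := Pt { kw : nat; kx : nat; ky : nat; kz : nat }.

Definition get (p : pt) (a : axis) : nat :=
  match a with AW => kw p | AX => kx p | AY => ky p | AZ => kz p end.

Definition differ_only (p q : pt) (a : axis) : Prop :=
  get p a <> get q a /\ forall b, b <> a -> get p b = get q b.

(* The curve of a hypercube diagram is described by the cyclic list of its
   consecutive quadruples (W_i, X_i, Y_i, Z_i): W_i is joined to X_i by a
   w-parallel segment, X_i to Y_i by an x-parallel one, Y_i to Z_i by a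
   y-parallel one and Z_i to W_(i+1) (indices mod the length) by a z-parallel one. *)
Definition quad := (pt * pt * pt * pt)%type.

Definition qW (q : quad) : pt := let '(w, _, _, _) := q in w.
Definition qX (q : quad) : pt := let '(_, x, _, _) := q in x.
Definition qY (q : quad) : pt := let '(_, _, y, _) := q in y.
Definition qZ (q : quad) : pt := let '(_, _, _, z) := q in z.

Definition dflt_pt : pt := Pt 0 0 0 0.
Definition dflt_quad : quad := (dflt_pt, dflt_pt, dflt_pt, dflt_pt).

Definition markings (qs : list quad) : list (label * pt) :=
  flat_map (fun q => [(LW, qW q); (LX, qX q); (LY, qY q); (LZ, qZ q)]) qs.

Definition is_curve (qs : list quad) : Prop :=
  (0 < length qs)%nat /\
  forall i, (i < length qs)%nat ->
    let q := nth i qs dflt_quad in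
    let q' := nth ((i + 1) mod length qs) qs dflt_quad in
    differ_only (qW q) (qX q) AW /\ differ_only (qX q) (qY q) AX /\
    differ_only (qY q) (qZ q) AY /\ differ_only (qZ q) (qW q') AZ.

Definition in_grid (n : nat) (qs : list quad) : Prop :=
  forall lp, In lp (markings qs) -> forall a, (get (snd lp) a < n)%nat.

Definition flat_list (qs : list quad) (a1 : axis) (k1 : nat) (a2 : axis) (k2 : nat)
  : list (label * pt) :=
  filter (fun lp => Nat.eqb (get (snd lp) a1) k1 && Nat.eqb (get (snd lp) a2) k2)
    (markings qs).

(* each cube {p_a in [k,k+1]} contains exactly one marking of each label *)
Definition cube_one_each (n : nat) (qs : list quad) : Prop :=
  forall a k L, (k < n)%nat ->
    length (filter (fun lp => label_eqb (fst lp) L && Nat.eqb (get (snd lp) a) k)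
              (markings qs)) = 1%nat.

Definition all_axes : list axis := [AW; AX; AY; AZ].

(* each cube {p_a in [k,k+1]} contains exactly two flats containing exactly
   three markings (the flats contained in that cube are those with fixed
   coordinates a = k and b = m for some axis b <> a and m < n) *)
Definition cube_two_flats (n : nat) (qs : list quad) : Prop :=
  forall a k, (k < n)%nat ->
    length (filter (fun bm => Nat.eqb (length (flat_list qs a k (fst bm) (snd bm))) 3)
       (list_prod (filter (fun b => negb (axis_eqb a b)) all_axes) (seq 0 n)))
    = 2%nat.

(* The label of the vertex prescribed for a flat with fixed axes a1, a2:
   zw-flat (fixed x,y) -> W, wx-flat (fixed y,z) -> X, xy-flat (fixed z,w) -> Y,
   yz-flat (fixed w,x) -> Z; a wy-flat or zx-flat admits no vertex. *)
Definition flat_vertex_label (a1 a2 : axis) : option label :=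
  match a1, a2 with
  | AX, AY | AY, AX => Some LW
  | AY, AZ | AZ, AY => Some LX
  | AZ, AW | AW, AZ => Some LY
  | AW, AX | AX, AW => Some LZ
  | _, _ => None
  end.

(* in each flat containing exactly three markings, they form a right angle
   with rays parallel to the two full coordinate axes of the flat, and the
   vertex has the label prescribed by the type of the flat *)
Definition right_angles (n : nat) (qs : list quad) : Prop :=
  forall a1 k1 a2 k2, a1 <> a2 -> (k1 < n)%nat -> (k2 < n)%nat ->
    length (flat_list qs a1 k1 a2 k2) = 3%nat ->
    exists (v p q : label * pt) (f1 f2 : axis),
      Permutation (flat_list qs a1 k1 a2 k2) [v; p; q] /\
      f1 <> f2 /\ f1 <> a1 /\ f1 <> a2 /\ f2 <> a1 /\ f2 <> a2 /\
      differ_only (snd v) (snd p) f1 /\ differ_only (snd v) (snd q) f2 /\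
      flat_vertex_label a1 a2 = Some (fst v).

Definition marking_conditions (n : nat) (qs : list quad) : Prop :=
  in_grid n qs /\ cube_one_each n qs /\ cube_two_flats n qs /\ right_angles n qs.

(* A closed polygon in the (a,b)-plane, given by the cyclic list of its
   corners (nat pair (i,j) = point (i+1/2, j+1/2)). *)
Definition poly := list (nat * nat).

(* G_wy: corners W_i, X_i projected to (w,y) (X_i ~ Y_i, Z_i ~ W_(i+1)) *)
Definition poly_wy (qs : list quad) : poly :=
  flat_map (fun q => [(kw (qW q), ky (qW q)); (kw (qX q), ky (qX q))]) qs.

(* G_zx: corners W_i (~ X_i), Z_i (~ Y_i) projected to (z,x);
   the segment W_i -> Z_i is x-parallel, Z_i -> W_(i+1) is z-parallel *)
Definition poly_zx (qs : list quad) : poly :=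
  flat_map (fun q => [(kz (qW q), kx (qW q)); (kz (qZ q), kx (qZ q))]) qs.

Definition vtx (V : poly) (k : Z) : nat * nat :=
  nth (Z.to_nat (Z.modulo k (Z.of_nat (length V)))) V (0%nat, 0%nat).

Definition vtxR (V : poly) (k : Z) : R * R :=
  (INR (fst (vtx V k)) + / 2, INR (snd (vtx V k)) + / 2).

Definition edgeR (V : poly) (k : Z) : R * R :=
  (fst (vtxR V (k + 1)) - fst (vtxR V k), snd (vtxR V (k + 1)) - snd (vtxR V k)).

(* piecewise-linear parametrization, period length V, edge k on [k, k+1] *)
Definition pl (V : poly) (th : R) : R * R :=
  let k := Int_part th in
  let f := th - IZR k in
  (fst (vtxR V k) + f * fst (edgeR V k), snd (vtxR V k) + f * snd (edgeR V k)).

(* its derivative (defined away from the corners) *)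
Definition dpl (V : poly) (th : R) : R * R := edgeR V (Int_part th).

Definition pl_int (V : poly) (th0 th1 : R) : R :=
  RInt (fun th => snd (pl V th) * fst (dpl V th)) th0 th1.

Definition pl_crossing (V : poly) (th0 th1 : R) : Prop :=
  0 <= th0 < INR (length V) /\ 0 <= th1 < INR (length V) /\ th0 <> th1 /\
  pl V th0 = pl V th1.

Definition lagrangian_grid (V : poly) : Prop :=
  pl_int V 0 (INR (length V)) = 0 /\
  forall th0 th1, pl_crossing V th0 th1 -> pl_int V th0 th1 <> 0.

Definition lagrangian_hypercube (n : nat) (qs : list quad) : Prop :=
  is_curve qs /\ marking_conditions n qs /\
  lagrangian_grid (poly_wy qs) /\ lagrangian_grid (poly_zx qs) /\
  forall th0 th1 ph0 ph1,
    pl_crossing (poly_zx qs) th0 th1 -> pl_crossing (poly_wy qs) ph0 ph1 ->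
    Rabs (pl_int (poly_zx qs) th0 th1) <> Rabs (pl_int (poly_wy qs) ph0 ph1).

Definition vtxZ (V : poly) (k : Z) : Z * Z :=
  (Z.of_nat (fst (vtx V k)), Z.of_nat (snd (vtx V k))).

Definition edgeZ (V : poly) (k : Z) : Z * Z :=
  (fst (vtxZ V (k + 1)) - fst (vtxZ V k), snd (vtxZ V (k + 1)) - snd (vtxZ V k))%Z.

Definition turn (V : poly) (k : Z) : Z :=
  (fst (edgeZ V (k - 1)) * snd (edgeZ V k) - snd (edgeZ V (k - 1)) * fst (edgeZ V k))%Z.

Definition n_ccw (V : poly) : Z :=
  Z.of_nat (length (filter (fun k => Z.ltb 0 (turn V (Z.of_nat k))) (seq 0 (length V)))).
Definition n_cw (V : poly) : Z :=
  Z.of_nat (length (filter (fun k => Z.ltb (turn V (Z.of_nat k)) 0) (seq 0 (length V)))).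

(* w(G) = (#ccw corners - #cw corners) / 4  (an exact division) *)
Definition wG (V : poly) : Z := ((n_ccw V - n_cw V) / 4)%Z.

Definition d1 (g : R -> R * R) (t : R) : R := Derive (fun s => fst (g s)) t.
Definition d2 (g : R -> R * R) (t : R) : R := Derive (fun s => snd (g s)) t.

(* g : R -> R^2, 2pi-periodic, is a slight smoothing of the corners of the
   polygon V: g is a C^1 regular closed curve, reparametrizing the polygon
   (via a continuous nondecreasing degree-one h) except in eps-windows around
   the corners, eps-close to it, and whose velocity while the parameter h is on
   the (closed) edge k has positive component along that edge; moreover g
   still satisfies the Lagrangian conditions (1) and (2). *)
Definition smoothing (V : poly) (g : R -> R * R) : Prop :=
  (forall t, g (t + 2 * PI) = g t) /\
  (forall t, ex_derive (fun s => fst (g s)) t /\ ex_derive (fun s => snd (g s)) t) /\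
  (forall t, continuous (d1 g) t /\ continuous (d2 g) t) /\
  (forall t, (d1 g t, d2 g t) <> (0, 0)) /\
  (exists (h : R -> R) (eps : R),
     0 < eps < / 4 /\
     (forall t, continuous h t) /\
     (forall t1 t2, t1 <= t2 -> h t1 <= h t2) /\
     (forall t, h (t + 2 * PI) = h t + INR (length V)) /\
     (forall t, (fst (g t) - fst (pl V (h t))) ^ 2 + (snd (g t) - snd (pl V (h t))) ^ 2
                <= eps ^ 2) /\
     (forall t, (forall k : Z, eps <= Rabs (h t - IZR k)) -> g t = pl V (h t)) /\
     (forall t (k : Z), IZR k <= h t <= IZR k + 1 ->
        d1 g t * fst (edgeR V k) + d2 g t * snd (edgeR V k) > 0)) /\
  RInt (fun t => snd (g t) * d1 g t) 0 (2 * PI) = 0 /\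
  (forall t0 t1, 0 <= t0 < 2 * PI -> 0 <= t1 < 2 * PI -> t0 <> t1 -> g t0 = g t1 ->
     RInt (fun t => snd (g t) * d1 g t) t0 t1 <> 0).

Record pt4 : Type := P4 { cw : R; cx : R; cy : R; cz : R }.

(* i(s,u) = (w(u), x(s), y(u), z(s)) with gzx = (z,x), gwy = (w,y) *)
Definition torus_imm (gzx gwy : R -> R * R) (s u : R) : pt4 :=
  P4 (fst (gwy u)) (snd (gzx s)) (snd (gwy u)) (fst (gzx s)).

Definition partial_s (I : R -> R -> pt4) (s u : R) : pt4 :=
  P4 (Derive (fun s' => cw (I s' u)) s) (Derive (fun s' => cx (I s' u)) s)
     (Derive (fun s' => cy (I s' u)) s) (Derive (fun s' => cz (I s' u)) s).

Definition partial_u (I : R -> R -> pt4) (s u : R) : pt4 :=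
  P4 (Derive (fun u' => cw (I s u')) u) (Derive (fun u' => cx (I s u')) u)
     (Derive (fun u' => cy (I s u')) u) (Derive (fun u' => cz (I s u')) u).

(* Identify (R^4, dw/\dy + dz/\dx) with C^2 via (w + i y, z + i x). *)
Definition cw_of (v : pt4) : C := (cw v, cy v).
Definition cz_of (v : pt4) : C := (cz v, cx v).

(* For a Lagrangian plane spanned by the columns of the complex matrix A,
   det(A)^2/|det A|^2 = det(U)^2 where U is the unitary matrix whose columns
   are an orthonormal basis of the plane: the phase map of the Lagrangian
   Grassmannian, whose degree along a loop is the Maslov index. *)
Definition lag_phase (I : R -> R -> pt4) (p : R * R) : R * R :=
  let vs := partial_s I (fst p) (snd p) in
  let vu := partial_u I (fst p) (snd p) in
  let d := Cminus (Cmult (cw_of vs) (cz_of vu)) (Cmult (cw_of vu) (cz_of vs)) in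
  let d2' := Cmult d d in
  (fst d2' / (Cmod d) ^ 2, snd d2' / (Cmod d) ^ 2).

(* a loop in the torus (R/2piZ)^2, given by a lift c to the parameter plane *)
Definition torus_loop (c : R -> R * R) : Prop :=
  (forall t, continuous c t) /\
  exists p q : Z, c 1 = (fst (c 0) + 2 * PI * IZR p, snd (c 0) + 2 * PI * IZR q).

Definition maslov_index (I : R -> R -> pt4) (c : R -> R * R) (m : Z) : Prop :=
  exists phi : R -> R,
    (forall t, continuous phi t) /\
    (forall t, 0 <= t <= 1 -> lag_phase I (c t) = (cos (phi t), sin (phi t))) /\
    phi 1 - phi 0 = 2 * PI * IZR m.

(* N is the Maslov number: smallest positive Maslov index of a loop, or 0 if
   every loop has Maslov index 0.  Loops of the Legendrian lift L correspond to
   loops of the parameter torus (L is the graph of t over the torus). *)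
Definition is_maslov_number (I : R -> R -> pt4) (N : Z) : Prop :=
  ((0 < N)%Z /\ (exists c, torus_loop c /\ maslov_index I c N) /\
     (forall c m, torus_loop c -> maslov_index I c m -> (0 < m)%Z -> (N <= m)%Z))
  \/
  (N = 0%Z /\ forall c m, torus_loop c -> maslov_index I c m -> m = 0%Z).

(* Main.v *)
Require Import Defs.
From Stdlib Require Import Reals ZArith List.
From Coquelicot Require Import Coquelicot.
From Stdlib Require Import Lra Lia.
Import ListNotations.
Open Scope R_scope.


Lemma trig_uniq x y : cos x = cos y -> sin x = sin y ->
  exists k : Z, x - y = 2 * PI * IZR k.
Proof.
  intros Hc Hs.
  assert (H1 : cos (x - y) = 1).
  { rewrite cos_minus, Hc, Hs. rewrite Rplus_comm. 
    pose proof (sin2_cos2 y) as E. unfold Rsqr in E. lra. }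
  assert (H2 : sin ((x - y)/2) = 0).
  { replace (x - y) with (2 * ((x-y)/2)) in H1 by field.
    rewrite cos_2a_sin in H1. nra. }
  destruct (sin_eq_0_0 _ H2) as [k Hk]. exists k. lra.
Qed.

Lemma cont_delta f x : continuous f x ->
  forall eps, 0 < eps -> exists d, 0 < d /\ forall y, Rabs (y - x) < d -> Rabs (f y - f x) < eps.
Proof.
  intros Hf eps He.
  apply continuity_pt_filterlim in Hf.
  destruct (Hf eps He) as [d [Hd H]].
  exists d; split; [lra|]. intros y Hy.
  destruct (Req_dec y x) as [->|Hne].
  - rewrite Rminus_eq_0, Rabs_R0; lra.
  - apply (H y). split. split; [exact I| auto]. exact Hy.
Qed.

Lemma loc_delta x (P : R -> Prop) : (exists d, 0 < d /\ forall y, Rabs (y - x) < d -> P y) ->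
  locally x P.
Proof.
  intros [d [Hd H]]. exists (mkposreal d Hd). intros y Hy. apply H. exact Hy.
Qed.

Lemma cont_of_pt f x : continuity_pt f x -> continuous f x.
Proof. intros H. apply continuity_pt_filterlim. exact H. Qed.

Lemma pt_of_cont f x : continuous f x -> continuity_pt f x.
Proof. intros H. apply continuity_pt_filterlim. exact H. Qed.

Lemma IZR_half_absurd (a j : Z) : IZR j = IZR a + / 2 -> False.
Proof.
  intros H. assert (IZR (2 * j) = IZR (2 * a + 1)) by (rewrite mult_IZR, plus_IZR, mult_IZR, H; lra).
  apply eq_IZR in H0. lia.
Qed.

Lemma const_2pi (f : R -> R) : (forall t, continuous f t) ->
  (forall t, 0 <= t <= 1 -> exists j : Z, f t = 2 * PI * IZR j) -> f 1 = f 0.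
Proof.
  intros Hc Hj.
  assert (Hcont : continuity f) by (intro t; apply pt_of_cont, Hc).
  destruct (Hj 0) as [a Ha]; [lra|]. destruct (Hj 1) as [b Hb]; [lra|].
  pose proof PI_RGT_0.
  destruct (Z.lt_total a b) as [Hab|[Hab|Hab]].
  - exfalso.
    assert (Hab' : IZR a + 1 <= IZR b).
    { rewrite <- plus_IZR. apply IZR_le. lia. }
    set (y := 2 * PI * IZR a + PI).
    destruct (IVT (fun t => f t - y) 0 1) as [z [Hz Hfz]].
    + apply continuity_minus; [exact Hcont| apply continuity_const; intros u v; reflexivity].
    + lra.
    + unfold y. rewrite Ha. lra.
    + unfold y. rewrite Hb. nra.
    + destruct (Hj z Hz) as [j Hjz]. apply (IZR_half_absurd a j).
      assert (2 * PI * IZR j = 2 * PI * (IZR a + /2)) by (unfold y in Hfz; rewrite <- Hjz; field_simplify; lra).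
      apply Rmult_eq_reg_l with (2 * PI); lra.
  - subst. congruence.
  - exfalso.
    assert (Hab' : IZR b + 1 <= IZR a).
    { rewrite <- plus_IZR. apply IZR_le. lia. }
    set (y := 2 * PI * IZR b + PI).
    destruct (IVT (fun t => y - f t) 0 1) as [z [Hz Hfz]].
    + apply continuity_minus; [apply continuity_const; intros u v; reflexivity|exact Hcont].
    + lra.
    + unfold y. rewrite Ha. nra.
    + unfold y. rewrite Hb. lra.
    + destruct (Hj z Hz) as [j Hjz]. apply (IZR_half_absurd b j).
      assert (2 * PI * IZR j = 2 * PI * (IZR b + /2)) by (unfold y in Hfz; rewrite <- Hjz; field_simplify; lra).
      apply Rmult_eq_reg_l with (2 * PI); lra.
Qed.
Lemma cR_plus (f g : R -> R) x : continuous f x -> continuous g x -> continuous (fun y => f y + g y) x.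
Proof. intros. exact (continuous_plus f g x H H0). Qed.
Lemma cR_mult (f g : R -> R) x : continuous f x -> continuous g x -> continuous (fun y => f y * g y) x.
Proof. intros. exact (continuous_mult f g x H H0). Qed.
Lemma cR_opp (f : R -> R) x : continuous f x -> continuous (fun y => - f y) x.
Proof. intros. exact (continuous_opp f x H). Qed.
Lemma cR_minus (f g : R -> R) x : continuous f x -> continuous g x -> continuous (fun y => f y - g y) x.
Proof. intros. apply cR_plus; [|apply cR_opp]; auto. Qed.
Lemma cR_div (f g : R -> R) x : continuous f x -> continuous g x -> g x <> 0 -> continuous (fun y => f y / g y) x.
Proof. intros. apply cR_mult; auto. apply continuous_Rinv_comp; auto. Qed.
Lemma cR_atan (f : R -> R) x : continuous f x -> continuous (fun y => atan (f y)) x.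
Proof. intros. apply (continuous_comp f atan); auto. apply (ex_derive_continuous atan). eexists. apply is_derive_atan. Qed.


Definition sumZ (l : list Z) : Z := fold_right Z.add 0%Z l.

Lemma sumZ_app l1 l2 : sumZ (l1 ++ l2) = (sumZ l1 + sumZ l2)%Z.
Proof. induction l1; simpl; [lia| rewrite IHl1; lia]. Qed.

Lemma count_sgn (f : nat -> Z) l :
  (Z.of_nat (length (filter (fun k => Z.ltb 0 (f k)) l)) -
   Z.of_nat (length (filter (fun k => Z.ltb (f k) 0) l)))%Z =
  sumZ (map (fun k => Z.sgn (f k)) l).
Proof.
  induction l as [|a l IH]; simpl; [reflexivity|].
  destruct (Z.ltb_spec 0 (f a)); destruct (Z.ltb_spec (f a) 0); simpl length;
  rewrite <- IH; try lia.
Qed.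

Definition Dsum (V : Defs.poly) : Z :=
  sumZ (map (fun k => Z.sgn (turn V (Z.of_nat k))) (seq 0 (length V))).

Lemma nccw_ncw V : (n_ccw V - n_cw V)%Z = Dsum V.
Proof. unfold n_ccw, n_cw, Dsum. apply (count_sgn (fun k => turn V (Z.of_nat k))). Qed.

Lemma vtx_per V k : vtx V (k + Z.of_nat (length V)) = vtx V k.
Proof.
  unfold vtx. f_equal. f_equal.
  replace (k + Z.of_nat (length V))%Z with (k + 1 * Z.of_nat (length V))%Z by lia.
  apply Z_mod_plus_full.
Qed.

Lemma edgeZ_per V k : edgeZ V (k + Z.of_nat (length V)) = edgeZ V k.
Proof.
  unfold edgeZ, vtxZ.
  replace (k + Z.of_nat (length V) + 1)%Z with ((k + 1) + Z.of_nat (length V))%Z by lia.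
  rewrite !vtx_per. reflexivity.
Qed.

Lemma turn_per V k : turn V (k + Z.of_nat (length V)) = turn V k.
Proof.
  unfold turn.
  replace (k + Z.of_nat (length V) - 1)%Z with ((k - 1) + Z.of_nat (length V))%Z by lia.
  rewrite !edgeZ_per. reflexivity.
Qed.

Lemma edgeR_fst V k : fst (edgeR V k) = IZR (fst (edgeZ V k)).
Proof.
  unfold edgeR, edgeZ, vtxR, vtxZ; simpl.
  rewrite minus_IZR, <- !INR_IZR_INZ. ring.
Qed.
Lemma edgeR_snd V k : snd (edgeR V k) = IZR (snd (edgeZ V k)).
Proof.
  unfold edgeR, edgeZ, vtxR, vtxZ; simpl.
  rewrite minus_IZR, <- !INR_IZR_INZ. ring.
Qed.

Lemma edgeR_per V k : edgeR V (k + Z.of_nat (length V)) = edgeR V k.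
Proof.
  unfold edgeR, vtxR.
  replace (k + Z.of_nat (length V) + 1)%Z with ((k + 1) + Z.of_nat (length V))%Z by lia.
  rewrite !vtx_per. reflexivity.
Qed.

Lemma turn_R V k : IZR (turn V (k + 1)) =
  fst (edgeR V k) * snd (edgeR V (k+1)) - snd (edgeR V k) * fst (edgeR V (k+1)).
Proof.
  unfold turn. replace (k + 1 - 1)%Z with k by lia.
  rewrite !edgeR_fst, !edgeR_snd, minus_IZR, !mult_IZR. reflexivity.
Qed.

Definition Ssum (V : Defs.poly) (k : Z) : Z :=
  if (0 <=? k)%Z then
    sumZ (map (fun i => Z.sgn (turn V (Z.of_nat i + 1))) (seq 0 (Z.to_nat k)))
  else (- sumZ (map (fun i => Z.sgn (turn V (- Z.of_nat i))) (seq 0 (Z.to_nat (- k)))))%Z.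

Lemma Ssum_0 V : Ssum V 0 = 0%Z.
Proof. reflexivity. Qed.

Lemma Ssum_S V k : Ssum V (k + 1) = (Ssum V k + Z.sgn (turn V (k + 1)))%Z.
Proof.
  unfold Ssum.
  destruct (Z.leb_spec 0 k).
  - rewrite (proj2 (Z.leb_le 0 (k+1))) by lia.
    replace (Z.to_nat (k + 1)) with (S (Z.to_nat k)) by lia.
    rewrite seq_S, map_app, sumZ_app. simpl. rewrite Z2Nat.id by lia. lia.
  - destruct (Z.eq_dec k (-1)) as [->|Hk].
    + simpl. lia.
    + rewrite (proj2 (Z.leb_gt 0 (k+1))) by lia.
      replace (Z.to_nat (- k)) with (S (Z.to_nat (- (k + 1)))) by lia.
      rewrite seq_S, map_app, sumZ_app. simpl.
      rewrite Z2Nat.id by lia. replace (- - (k + 1))%Z with (k + 1)%Z by lia. lia.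
Qed.

Lemma Z_bi_ind (P : Z -> Prop) : P 0%Z -> (forall k, P k -> P (k + 1)%Z) ->
  (forall k, P (k + 1)%Z -> P k) -> forall k, P k.
Proof.
  intros H0 Hs Hp k. induction k using Z.peano_ind; auto.
  - rewrite <- Z.add_1_r. auto.
  - apply Hp. replace (Z.pred k + 1)%Z with k by lia. auto.
Qed.

Lemma sum_shift (f : nat -> Z) n :
  sumZ (map (fun i => f (S i)) (seq 0 n)) = (sumZ (map f (seq 0 n)) + f n - f O)%Z.
Proof.
  induction n; [simpl; lia|].
  rewrite !seq_S, !map_app, !sumZ_app. simpl. rewrite IHn. lia.
Qed.

Lemma Ssum_per V k : Ssum V (k + Z.of_nat (length V)) = (Ssum V k + Dsum V)%Z.
Proof.
  induction k using Z_bi_ind.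
  - simpl. unfold Ssum. rewrite (proj2 (Z.leb_le 0 _)) by lia. rewrite Nat2Z.id.
    unfold Dsum.
    pose proof (sum_shift (fun i => Z.sgn (turn V (Z.of_nat i))) (length V)) as E.
    cbv beta in E.
    replace (map (fun i : nat => Z.sgn (turn V (Z.of_nat i + 1))) (seq 0 (length V)))
      with (map (fun i : nat => Z.sgn (turn V (Z.of_nat (S i)))) (seq 0 (length V))).
    2:{ apply map_ext. intros. f_equal. f_equal. lia. }
    rewrite E. replace (Z.of_nat (length V)) with (0 + Z.of_nat (length V))%Z by lia.
    rewrite turn_per. simpl. lia.
  - replace (k + 1 + Z.of_nat (length V))%Z with ((k + Z.of_nat (length V)) + 1)%Z by lia.
    rewrite !Ssum_S, IHk.
    replace (k + Z.of_nat (length V) + 1)%Z with ((k + 1) + Z.of_nat (length V))%Z by lia.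
    rewrite turn_per. lia.
  - replace (k + 1 + Z.of_nat (length V))%Z with ((k + Z.of_nat (length V)) + 1)%Z in IHk by lia.
    rewrite !Ssum_S in IHk.
    replace (k + Z.of_nat (length V) + 1)%Z with ((k + 1) + Z.of_nat (length V))%Z in IHk by lia.
    rewrite turn_per in IHk. lia.
Qed.


Section Flat.
Variable f g : quad -> nat * nat.

Lemma flat2_len qs : length (flat_map (fun q => [f q; g q]) qs) = (2 * length qs)%nat.
Proof. induction qs; simpl; [reflexivity| rewrite IHqs; lia]. Qed.

Lemma flat2_even qs i d : (i < length qs)%nat ->
  nth (2 * i) (flat_map (fun q => [f q; g q]) qs) d = f (nth i qs dflt_quad).
Proof.
  revert i; induction qs as [|q qs IH]; intros i Hi; simpl in Hi; [lia|].
  destruct i; [reflexivity|].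
  replace (2 * S i)%nat with (S (S (2 * i))) by lia. simpl. apply IH. lia.
Qed.

Lemma flat2_odd qs i d : (i < length qs)%nat ->
  nth (S (2 * i)) (flat_map (fun q => [f q; g q]) qs) d = g (nth i qs dflt_quad).
Proof.
  revert i; induction qs as [|q qs IH]; intros i Hi; simpl in Hi; [lia|].
  destruct i; [reflexivity|].
  replace (S (2 * S i))%nat with (S (S (S (2 * i)))) by lia. simpl. apply IH. lia.
Qed.

Variable qs : list quad.
Hypothesis Hlen : (0 < length qs)%nat.
Let V := flat_map (fun q => [f q; g q]) qs.
Let L := length qs.

Lemma vtx_at (k : Z) (j : nat) : (k mod Z.of_nat (length V))%Z = Z.of_nat j ->
  vtx V k = nth j V (0%nat, 0%nat).
Proof. intros H. unfold vtx. rewrite H, Nat2Z.id. reflexivity. Qed.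

Lemma mod_split k : exists i, (i < L)%nat /\
  ((k mod Z.of_nat (length V))%Z = Z.of_nat (2 * i) \/
   (k mod Z.of_nat (length V))%Z = Z.of_nat (S (2 * i))).
Proof.
  unfold V. rewrite flat2_len. fold L.
  pose proof (Z.mod_pos_bound k (Z.of_nat (2 * L)) ltac:(unfold L; lia)) as B.
  set (r := (k mod Z.of_nat (2 * L))%Z) in *.
  exists (Z.to_nat r / 2)%nat.
  pose proof (Nat.div_mod (Z.to_nat r) 2 ltac:(lia)).
  pose proof (Nat.mod_upper_bound (Z.to_nat r) 2 ltac:(lia)).
  split; [lia|].
  destruct (Z.to_nat r mod 2)%nat as [|[|]] eqn:E; [left|right|lia]; lia.
Qed.

Lemma next_mod k j : (k mod Z.of_nat (length V))%Z = Z.of_nat j ->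
  ((k + 1) mod Z.of_nat (length V))%Z = Z.of_nat ((S j) mod (length V)).
Proof.
  intros H. rewrite Nat2Z.inj_mod. rewrite <- Zplus_mod_idemp_l, H. f_equal. lia.
Qed.

Lemma vA k i : (i < L)%nat -> (k mod Z.of_nat (length V))%Z = Z.of_nat (2 * i) ->
  vtx V k = f (nth i qs dflt_quad) /\ vtx V (k + 1) = g (nth i qs dflt_quad) /\
  ((k + 1) mod Z.of_nat (length V))%Z = Z.of_nat (S (2 * i)).
Proof.
  intros Hi H.
  assert (HL : length V = (2 * L)%nat) by (unfold V; apply flat2_len).
  assert (H1 : ((k + 1) mod Z.of_nat (length V))%Z = Z.of_nat (S (2 * i))).
  { rewrite (next_mod _ _ H). f_equal. apply Nat.mod_small. lia. }
  split; [|split; [|exact H1]].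
  - rewrite (vtx_at _ _ H). apply flat2_even. exact Hi.
  - rewrite (vtx_at _ _ H1). apply flat2_odd. exact Hi.
Qed.

Lemma vB k i : (i < L)%nat -> (k mod Z.of_nat (length V))%Z = Z.of_nat (S (2 * i)) ->
  vtx V k = g (nth i qs dflt_quad) /\
  vtx V (k + 1) = f (nth ((i + 1) mod L) qs dflt_quad) /\
  ((k + 1) mod Z.of_nat (length V))%Z = Z.of_nat (2 * ((i + 1) mod L)).
Proof.
  intros Hi H.
  assert (HL : length V = (2 * L)%nat) by (unfold V; apply flat2_len).
  assert (H1 : ((k + 1) mod Z.of_nat (length V))%Z = Z.of_nat (2 * ((i + 1) mod L))).
  { rewrite (next_mod _ _ H). f_equal. rewrite HL.
    replace (S (S (2 * i))) with (2 * (i + 1))%nat by lia.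
    rewrite Nat.mul_mod_distr_l by lia. reflexivity. }
  split; [|split; [|exact H1]].
  - rewrite (vtx_at _ _ H). apply flat2_odd. exact Hi.
  - rewrite (vtx_at _ _ H1). apply flat2_even. apply Nat.mod_upper_bound. lia.
Qed.

End Flat.

Definition vert (e : Z * Z) : Prop := fst e = 0%Z /\ snd e <> 0%Z.
Definition horiz (e : Z * Z) : Prop := snd e = 0%Z /\ fst e <> 0%Z.
Definition good_edges (V : Defs.poly) : Prop :=
  (0 < length V)%nat /\
  forall k, (vert (edgeZ V k) /\ horiz (edgeZ V (k + 1))) \/
            (horiz (edgeZ V k) /\ vert (edgeZ V (k + 1))).

Lemma good_gen (f g : quad -> nat * nat) qs (PA PB : Z * Z -> Prop) :
  (0 < length qs)%nat ->
  (forall i, (i < length qs)%nat ->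
     PA (Z.of_nat (fst (g (nth i qs dflt_quad))) - Z.of_nat (fst (f (nth i qs dflt_quad))),
         Z.of_nat (snd (g (nth i qs dflt_quad))) - Z.of_nat (snd (f (nth i qs dflt_quad))))%Z /\
     PB (Z.of_nat (fst (f (nth ((i + 1) mod length qs) qs dflt_quad))) - Z.of_nat (fst (g (nth i qs dflt_quad))),
         Z.of_nat (snd (f (nth ((i + 1) mod length qs) qs dflt_quad))) - Z.of_nat (snd (g (nth i qs dflt_quad))))%Z) ->
  forall k, (PA (edgeZ (flat_map (fun q => [f q; g q]) qs) k) /\
             PB (edgeZ (flat_map (fun q => [f q; g q]) qs) (k + 1))) \/
            (PB (edgeZ (flat_map (fun q => [f q; g q]) qs) k) /\
             PA (edgeZ (flat_map (fun q => [f q; g q]) qs) (k + 1))).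
Proof.
  intros Hl HP k.
  destruct (mod_split f g qs Hl k) as [i [Hi [Hr|Hr]]].
  - left. destruct (vA f g qs Hl k i Hi Hr) as [E1 [E2 E3]].
    destruct (vB f g qs Hl (k + 1) i Hi E3) as [F1 [F2 F3]].
    destruct (HP i Hi) as [HA HB]. unfold edgeZ, vtxZ.
    rewrite E1, E2. split; [exact HA|].
    rewrite F2. exact HB.
  - right. destruct (vB f g qs Hl k i Hi Hr) as [E1 [E2 E3]].
    assert (Hi' : ((i + 1) mod length qs < length qs)%nat) by (apply Nat.mod_upper_bound; lia).
    destruct (vA f g qs Hl (k + 1) _ Hi' E3) as [F1 [F2 F3]].
    destruct (HP i Hi) as [HA HB]. destruct (HP _ Hi') as [HA' HB'].
    unfold edgeZ, vtxZ. rewrite E1, E2. split; [exact HB|].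
    rewrite F2. exact HA'.
Qed.


Lemma quad_facts qs i : is_curve qs -> (i < length qs)%nat ->
  let q := nth i qs dflt_quad in
  let q' := nth ((i + 1) mod length qs) qs dflt_quad in
  kz (qW q) = kz (qZ q) /\ kx (qW q) <> kx (qZ q) /\
  kx (qZ q) = kx (qW q') /\ kz (qZ q) <> kz (qW q') /\
  kw (qW q) <> kw (qX q) /\ ky (qW q) = ky (qX q) /\
  kw (qX q) = kw (qW q') /\ ky (qX q) <> ky (qW q').
Proof.
  intros [_ Hc] Hi q q'.
  destruct (Hc i Hi) as [[A1 A2] [[B1 B2] [[C1 C2] [D1 D2]]]].
  fold q q' in A1, A2, B1, B2, C1, C2, D1, D2.
  pose proof (A2 AX ltac:(discriminate)) as a2; pose proof (A2 AY ltac:(discriminate)) as a3;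
  pose proof (A2 AZ ltac:(discriminate)) as a4.
  pose proof (B2 AW ltac:(discriminate)) as b1; pose proof (B2 AY ltac:(discriminate)) as b3;
  pose proof (B2 AZ ltac:(discriminate)) as b4.
  pose proof (C2 AW ltac:(discriminate)) as c1; pose proof (C2 AX ltac:(discriminate)) as c2;
  pose proof (C2 AZ ltac:(discriminate)) as c4.
  pose proof (D2 AW ltac:(discriminate)) as d1; pose proof (D2 AX ltac:(discriminate)) as d2;
  pose proof (D2 AY ltac:(discriminate)) as d3.
  simpl in *. repeat split; lia.
Qed.

Lemma good_zx qs : is_curve qs -> good_edges (poly_zx qs).
Proof.
  intros Hc. assert (Hl : (0 < length qs)%nat) by (apply Hc).
  split.
  - unfold poly_zx. rewrite (flat2_len (fun q => (kz (qW q), kx (qW q))) (fun q => (kz (qZ q), kx (qZ q)))). lia.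
  - apply (good_gen (fun q => (kz (qW q), kx (qW q))) (fun q => (kz (qZ q), kx (qZ q))) qs vert horiz Hl).
    intros i Hi. destruct (quad_facts qs i Hc Hi) as [F1 [F2 [F3 [F4 _]]]].
    unfold vert, horiz; simpl. repeat split; lia.
Qed.

Lemma good_wy qs : is_curve qs -> good_edges (poly_wy qs).
Proof.
  intros Hc. assert (Hl : (0 < length qs)%nat) by (apply Hc).
  split.
  - unfold poly_wy. rewrite (flat2_len (fun q => (kw (qW q), ky (qW q))) (fun q => (kw (qX q), ky (qX q)))). lia.
  - intros k. destruct (good_gen (fun q => (kw (qW q), ky (qW q))) (fun q => (kw (qX q), ky (qX q))) qs horiz vert Hl) with (k := k) as [H|H].
    + intros i Hi. destruct (quad_facts qs i Hc Hi) as [_ [_ [_ [_ [F1 [F2 [F3 F4]]]]]]].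
      unfold vert, horiz; simpl. repeat split; lia.
    + right. exact H.
    + left. exact H.
Qed.


Lemma rotate (c Phi x y : R) (Tz : Z) : 0 < c ->
  c * cos Phi * x + c * sin Phi * y = 0 -> (x <> 0 \/ y <> 0) ->
  IZR Tz = c * cos Phi * y - c * sin Phi * x ->
  exists c', 0 < c' /\ x = c' * cos (Phi + PI / 2 * IZR (Z.sgn Tz)) /\
                       y = c' * sin (Phi + PI / 2 * IZR (Z.sgn Tz)).
Proof.
  intros Hc Hp Hnz HT.
  set (C := cos Phi) in *. set (S := sin Phi) in *.
  assert (HCS : C * C + S * S = 1) by (unfold C, S; pose proof (sin2_cos2 Phi); unfold Rsqr in *; lra).
  set (l := C * y - S * x).
  assert (Hp' : C * x + S * y = 0).
  { apply Rmult_eq_reg_l with c; [|lra]. rewrite Rmult_0_r. rewrite <- Hp. ring. }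
  assert (Ex : x = - S * l).
  { unfold l. transitivity (x * (C * C + S * S) - C * (C * x + S * y)); [rewrite HCS, Hp'; ring| ring]. }
  assert (Ey : y = C * l).
  { unfold l. transitivity (y * (C * C + S * S) - S * (C * x + S * y)); [rewrite HCS, Hp'; ring| ring]. }
  assert (HT' : IZR Tz = c * l) by (rewrite HT; unfold l; ring).
  destruct (Rtotal_order l 0) as [Hl|[Hl|Hl]].
  - assert (Tz < 0)%Z by (apply lt_IZR; rewrite HT'; nra).
    rewrite Z.sgn_neg by assumption.
    exists (- l). split; [lra|].
    replace (Phi + PI / 2 * IZR (-1)) with (Phi - PI / 2) by (simpl; ring).
    rewrite cos_minus, sin_minus, cos_PI2, sin_PI2. fold C S. split; nra.
  - exfalso. rewrite Hl in Ex, Ey. destruct Hnz; lra.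
  - assert (0 < Tz)%Z by (apply lt_IZR; rewrite HT'; nra).
    rewrite Z.sgn_pos by assumption.
    exists l. split; [lra|].
    replace (Phi + PI / 2 * IZR 1) with (Phi + PI / 2) by (simpl; ring).
    rewrite cos_plus, sin_plus, cos_PI2, sin_PI2. fold C S. split; nra.
Qed.

Lemma floor_spec x : IZR (Int_part x) <= x < IZR (Int_part x) + 1.
Proof. pose proof (base_Int_part x). lra. Qed.

Lemma floor_uniq x k : IZR k <= x < IZR k + 1 -> Int_part x = k.
Proof.
  intros [H1 H2]. pose proof (floor_spec x) as [H3 H4].
  assert (k < Int_part x + 1)%Z by (apply lt_IZR; rewrite plus_IZR; simpl; lra).
  assert (Int_part x < k + 1)%Z by (apply lt_IZR; rewrite plus_IZR; simpl; lra).
  lia.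
Qed.

Lemma deriv_per (F : R -> R) T t : (forall s, F (s + T) = F s) -> ex_derive F (t + T) ->
  Derive F (t + T) = Derive F t.
Proof.
  intros Hp Hd.
  assert (H : is_derive (fun s => F (s + T)) t (scal 1 (Derive F (t + T)))).
  { apply (is_derive_comp F (fun s => s + T)). apply Derive_correct, Hd.
    auto_derive; [exact I| ring]. }
  assert (E : Derive (fun s => F (s + T)) t = scal 1 (Derive F (t + T))) by (apply is_derive_unique; exact H).
  rewrite (Derive_ext (fun s => F (s + T)) F t Hp) in E. rewrite E. unfold scal; simpl; unfold mult; simpl. ring.
Qed.


Lemma edge_facts V : good_edges V -> forall k,
  fst (edgeR V k) * fst (edgeR V (k + 1)) + snd (edgeR V k) * snd (edgeR V (k + 1)) = 0 /\
  (fst (edgeR V k) <> 0 \/ snd (edgeR V k) <> 0).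
Proof.
  intros [_ HV] k. rewrite !edgeR_fst, !edgeR_snd.
  destruct (HV k) as [[[A1 A2] [B1 B2]]|[[A1 A2] [B1 B2]]].
  - rewrite A1, B1. split; [simpl; ring| right; intro H; apply A2; apply eq_IZR; exact H].
  - rewrite A1, B1. split; [simpl; ring| left; intro H; apply A2; apply eq_IZR; exact H].
Qed.

Lemma phi0_ex V : good_edges V -> exists p c, 0 < c /\
  fst (edgeR V 0) = c * cos p /\ snd (edgeR V 0) = c * sin p.
Proof.
  intros HV. destruct (edge_facts V HV 0) as [_ Hnz].
  destruct HV as [_ HV]. destruct (HV 0%Z) as [[[A1 _] _]|[[A1 _] _]].
  - assert (Hx : fst (edgeR V 0) = 0) by (rewrite edgeR_fst, A1; reflexivity).
    destruct Hnz as [Hnz|Hnz]; [contradiction|].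
    destruct (Rlt_or_le 0 (snd (edgeR V 0))).
    + exists (PI / 2), (snd (edgeR V 0)). rewrite cos_PI2, sin_PI2. repeat split; lra.
    + exists (- (PI / 2)), (- snd (edgeR V 0)). rewrite cos_neg, sin_neg, cos_PI2, sin_PI2. repeat split; lra.
  - assert (Hx : snd (edgeR V 0) = 0) by (rewrite edgeR_snd, A1; reflexivity).
    destruct Hnz as [Hnz|Hnz]; [|contradiction].
    destruct (Rlt_or_le 0 (fst (edgeR V 0))).
    + exists 0, (fst (edgeR V 0)). rewrite cos_0, sin_0. repeat split; lra.
    + exists PI, (- fst (edgeR V 0)). rewrite cos_PI, sin_PI. repeat split; lra.
Qed.

Section Lift.
Variable V : Defs.poly.
Hypothesis HV : good_edges V.
Variable p0 : R.
Hypothesis Hp0 : exists c, 0 < c /\ fst (edgeR V 0) = c * cos p0 /\ snd (edgeR V 0) = c * sin p0.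

Definition Phi (k : Z) : R := PI / 2 * IZR (Ssum V k) + p0.
Definition Inv (k : Z) : Prop := exists c, 0 < c /\
  fst (edgeR V k) = c * cos (Phi k) /\ snd (edgeR V k) = c * sin (Phi k).

Lemma Phi_S k : Phi (k + 1) = Phi k + PI / 2 * IZR (Z.sgn (turn V (k + 1))).
Proof. unfold Phi. rewrite Ssum_S, plus_IZR. ring. Qed.

Lemma Inv_all : forall k, Inv k.
Proof.
  apply Z_bi_ind.
  - unfold Inv, Phi. rewrite Ssum_0. simpl. replace (PI / 2 * 0 + p0) with p0 by ring. exact Hp0.
  - intros k [c [Hc [H1 H2]]]. destruct (edge_facts V HV k) as [Hp Hnz].
    destruct (edge_facts V HV (k + 1)) as [_ Hnz'].
    destruct (rotate c (Phi k) (fst (edgeR V (k + 1))) (snd (edgeR V (k + 1))) (turn V (k + 1)) Hc)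
      as [c' [Hc' [E1 E2]]].
    + rewrite <- H1, <- H2. exact Hp.
    + exact Hnz'.
    + rewrite turn_R, H1, H2. ring.
    + exists c'. rewrite Phi_S. auto.
  - intros k [c [Hc [H1 H2]]]. destruct (edge_facts V HV k) as [Hp Hnz].
    destruct (rotate c (Phi (k + 1)) (fst (edgeR V k)) (snd (edgeR V k)) (- turn V (k + 1)) Hc)
      as [c' [Hc' [E1 E2]]].
    + rewrite <- H1, <- H2. lra.
    + exact Hnz.
    + rewrite opp_IZR, turn_R, H1, H2. ring.
    + exists c'. rewrite Phi_S in E1, E2. rewrite Z.sgn_opp, opp_IZR in E1, E2.
      replace (Phi k + PI / 2 * IZR (Z.sgn (turn V (k + 1))) + PI / 2 * - IZR (Z.sgn (turn V (k + 1))))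
        with (Phi k) in E1, E2 by ring. auto.
Qed.

Lemma D_div4 : exists j, Dsum V = (4 * j)%Z.
Proof.
  destruct (Inv_all 0) as [c0 [Hc0 [A1 A2]]].
  destruct (Inv_all (0 + Z.of_nat (length V))) as [c1 [Hc1 [B1 B2]]].
  rewrite edgeR_per in B1, B2.
  unfold Phi in *. rewrite Ssum_per, Ssum_0 in *. simpl Z.add in *.
  set (x := PI / 2 * IZR (Dsum V) + p0) in *.
  replace (PI / 2 * IZR 0 + p0) with p0 in * by (simpl; ring).
  assert (Hcc : c1 = c0).
  { assert (c1 * c1 = c0 * c0).
    { pose proof (sin2_cos2 x). pose proof (sin2_cos2 p0). unfold Rsqr in *.
      transitivity ((c1 * cos x)^2 + (c1 * sin x)^2); [nra|].
      rewrite <- B1, <- B2, A1, A2. nra. }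
    nra. }
  subst c1.
  assert (cos x = cos p0) by (apply Rmult_eq_reg_l with c0; lra).
  assert (sin x = sin p0) by (apply Rmult_eq_reg_l with c0; lra).
  destruct (trig_uniq x p0) as [j Hj]; auto.
  exists j. apply eq_IZR. rewrite mult_IZR. unfold x in Hj.
  pose proof PI_RGT_0. apply Rmult_eq_reg_l with (PI / 2); [|lra].
  simpl (IZR 4). lra.
Qed.

Lemma wG_D : (Dsum V = 4 * wG V)%Z.
Proof.
  destruct D_div4 as [j Hj]. unfold wG. rewrite nccw_ncw, Hj.
  rewrite Z.mul_comm, Z.div_mul by lia. lia.
Qed.

Definition dotk k a b := fst (edgeR V k) * a + snd (edgeR V k) * b.
Definition crossk k a b := fst (edgeR V k) * b - snd (edgeR V k) * a.
Definition ang k a b := Phi k + atan (crossk k a b / dotk k a b).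

Lemma ang_lift k a b : 0 < dotk k a b ->
  cos (ang k a b) * sqrt (a * a + b * b) = a /\ sin (ang k a b) * sqrt (a * a + b * b) = b.
Proof.
  intros Hd. destruct (Inv_all k) as [c [Hc [H1 H2]]].
  unfold ang, dotk, crossk in *. rewrite H1, H2 in *.
  set (C := cos (Phi k)) in *. set (S := sin (Phi k)) in *.
  assert (HCS : C * C + S * S = 1) by (unfold C, S; pose proof (sin2_cos2 (Phi k)); unfold Rsqr in *; lra).
  set (r := sqrt (a * a + b * b)).
  assert (Hab : 0 < a * a + b * b).
  { destruct (Req_dec a 0); destruct (Req_dec b 0); subst; try nra. }
  assert (Hr : 0 < r) by (apply sqrt_lt_R0; exact Hab).
  assert (Hr2 : r * r = a * a + b * b) by (apply sqrt_sqrt; lra).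
  set (dt := c * C * a + c * S * b) in *.
  set (cr := c * C * b - c * S * a).
  assert (Hsq : sqrt (1 + (cr / dt)²) = c * r / dt).
  { rewrite <- (sqrt_Rsqr (c * r / dt)).
    2: { apply Rlt_le. apply Rdiv_lt_0_compat; nra. }
    f_equal. unfold Rsqr. field_simplify_eq; [|lra].
    unfold cr, dt. 
    transitivity (c * c * (C * C + S * S) * (a * a + b * b)); [ring|].
    rewrite HCS, <- Hr2. ring. }
  assert (Hdt : 0 < dt) by exact Hd.
  assert (K1 : C * dt - S * cr = c * a).
  { unfold dt, cr. transitivity (c * a * (C * C + S * S)); [ring| rewrite HCS; ring]. }
  assert (K2 : S * dt + C * cr = c * b).
  { unfold dt, cr. transitivity (c * b * (C * C + S * S)); [ring| rewrite HCS; ring]. }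
  rewrite cos_plus, sin_plus, cos_atan, sin_atan, Hsq. fold C S.
  split.
  - replace (C * (1 / (c * r / dt)) - S * (cr / dt / (c * r / dt))) with ((C * dt - S * cr) / (c * r))
      by (field; repeat split; lra).
    rewrite K1. field. lra.
  - replace (S * (1 / (c * r / dt)) + C * (cr / dt / (c * r / dt))) with ((S * dt + C * cr) / (c * r))
      by (field; repeat split; lra).
    rewrite K2. field. lra.
Qed.

Lemma ang_agree k a b : 0 < dotk k a b -> 0 < dotk (k + 1) a b -> ang k a b = ang (k + 1) a b.
Proof.
  intros H1 H2.
  destruct (ang_lift k a b H1) as [A1 A2]. destruct (ang_lift (k + 1) a b H2) as [B1 B2].
  assert (Hab : 0 < a * a + b * b).
  { unfold dotk in H1. destruct (Req_dec a 0); destruct (Req_dec b 0); subst; try nra. }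
  assert (Hr : 0 < sqrt (a * a + b * b)) by (apply sqrt_lt_R0; exact Hab).
  assert (Hc : cos (ang (k + 1) a b) = cos (ang k a b)) by (apply Rmult_eq_reg_r with (sqrt (a*a+b*b)); lra).
  assert (Hs : sin (ang (k + 1) a b) = sin (ang k a b)) by (apply Rmult_eq_reg_r with (sqrt (a*a+b*b)); lra).
  destruct (trig_uniq _ _ Hc Hs) as [j Hj].
  assert (Hdf : ang (k + 1) a b - ang k a b = PI / 2 * IZR (Z.sgn (turn V (k + 1)))
     + atan (crossk (k + 1) a b / dotk (k + 1) a b) - atan (crossk k a b / dotk k a b))
    by (unfold ang; rewrite Phi_S; ring).
  pose proof (atan_bound (crossk k a b / dotk k a b)).
  pose proof (atan_bound (crossk (k + 1) a b / dotk (k + 1) a b)).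
  pose proof PI_RGT_0.
  assert (Hsg : -1 <= IZR (Z.sgn (turn V (k + 1))) <= 1).
  { split; apply IZR_le; destruct (turn V (k + 1)); simpl; lia. }
  assert (j = 0%Z).
  { destruct (Z.lt_total j 0) as [Hl|[Hl|Hl]]; auto; exfalso.
    - assert (IZR j <= -1) by (apply IZR_le; lia). nra.
    - assert (1 <= IZR j) by (apply IZR_le; lia). nra. }
  subst j. rewrite Rmult_0_r in Hj. lra.
Qed.

Lemma ang_per k a b : ang (k + Z.of_nat (length V)) a b = ang k a b + 2 * PI * IZR (wG V).
Proof.
  unfold ang, Phi, dotk, crossk. rewrite !edgeR_per, Ssum_per, plus_IZR, wG_D, mult_IZR.
  simpl (IZR 4). field.
Qed.

Lemma ang_cont (f1 f2 : R -> R) k t : continuous f1 t -> continuous f2 t ->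
  dotk k (f1 t) (f2 t) <> 0 -> continuous (fun s => ang k (f1 s) (f2 s)) t.
Proof.
  intros H1 H2 Hd. unfold ang.
  apply cR_plus; [apply continuous_const|]. apply cR_atan.
  unfold crossk, dotk. apply cR_div; [| |exact Hd];
  [apply cR_minus| apply cR_plus]; apply cR_mult; auto; apply continuous_const.
Qed.

End Lift.


Section Theta.
Variable V : Defs.poly.
Hypothesis HV : good_edges V.
Variable p0 : R.
Hypothesis Hp0 : exists c, 0 < c /\ fst (edgeR V 0) = c * cos p0 /\ snd (edgeR V 0) = c * sin p0.
Variable g : R -> R * R.
Variable h : R -> R.
Hypothesis Hh : forall t, continuous h t.
Hypothesis Hhp : forall t, h (t + 2 * PI) = h t + INR (length V).
Hypothesis Hdir : forall t (k : Z), IZR k <= h t <= IZR k + 1 ->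
  Defs.d1 g t * fst (edgeR V k) + Defs.d2 g t * snd (edgeR V k) > 0.
Hypothesis Hgp : forall t, g (t + 2 * PI) = g t.
Hypothesis Hgd : forall t, ex_derive (fun s => fst (g s)) t /\ ex_derive (fun s => snd (g s)) t.
Hypothesis Hgc : forall t, continuous (Defs.d1 g) t /\ continuous (Defs.d2 g) t.

Definition theta (t : R) : R := ang V p0 (Int_part (h t)) (Defs.d1 g t) (Defs.d2 g t).

Lemma dot_pos t k : IZR k <= h t <= IZR k + 1 -> 0 < dotk V k (Defs.d1 g t) (Defs.d2 g t).
Proof. intros H. specialize (Hdir t k H). unfold dotk. lra. Qed.

Lemma theta_lift t : cos (theta t) * sqrt (Defs.d1 g t * Defs.d1 g t + Defs.d2 g t * Defs.d2 g t) = Defs.d1 g t /\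
                     sin (theta t) * sqrt (Defs.d1 g t * Defs.d1 g t + Defs.d2 g t * Defs.d2 g t) = Defs.d2 g t.
Proof.
  unfold theta. apply (ang_lift V HV p0 Hp0). apply dot_pos.
  pose proof (floor_spec (h t)). lra.
Qed.

Lemma dot_cont k t : continuous (fun s => dotk V k (Defs.d1 g s) (Defs.d2 g s)) t.
Proof.
  unfold dotk. destruct (Hgc t) as [C1 C2].
  apply cR_plus; apply cR_mult.
  - apply continuous_const.
  - exact C1.
  - apply continuous_const.
  - exact C2.
Qed.

Lemma theta_cont t0 : continuous theta t0.
Proof.
  set (k := Int_part (h t0)). pose proof (floor_spec (h t0)) as [F1 F2]. fold k in F1, F2.
  destruct (Rle_lt_or_eq_dec _ _ F1) as [Hlt|Heq].
  - set (eps := Rmin (h t0 - IZR k) (IZR k + 1 - h t0)).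
    assert (He : 0 < eps) by (unfold eps; apply Rmin_pos; lra).
    destruct (cont_delta h t0 (Hh t0) eps He) as [d [Hd Hdd]].
    apply (continuous_ext_loc theta (fun s => ang V p0 k (Defs.d1 g s) (Defs.d2 g s)) t0).
    + apply loc_delta. exists d. split; [exact Hd|]. intros y Hy.
      specialize (Hdd y Hy). unfold theta.
      assert (eps <= h t0 - IZR k) by apply Rmin_l.
      assert (eps <= IZR k + 1 - h t0) by apply Rmin_r.
      apply Rabs_def2 in Hdd.
      rewrite (floor_uniq (h y) k) by lra. reflexivity.
    + destruct (Hgc t0) as [C1 C2]. apply ang_cont; [exact C1| exact C2|]. apply Rgt_not_eq, dot_pos. lra.
  - assert (P1 : 0 < dotk V (k - 1) (Defs.d1 g t0) (Defs.d2 g t0)).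
    { apply dot_pos. rewrite minus_IZR. simpl. lra. }
    assert (P2 : 0 < dotk V k (Defs.d1 g t0) (Defs.d2 g t0)) by (apply dot_pos; lra).
    destruct (cont_delta h t0 (Hh t0) 1 Rlt_0_1) as [d1' [Hd1 Hdd1]].
    destruct (cont_delta _ t0 (dot_cont (k - 1) t0) _ P1) as [d2' [Hd2 Hdd2]].
    destruct (cont_delta _ t0 (dot_cont k t0) _ P2) as [d3' [Hd3 Hdd3]].
    apply (continuous_ext_loc theta (fun s => ang V p0 k (Defs.d1 g s) (Defs.d2 g s)) t0).
    + apply loc_delta. exists (Rmin d1' (Rmin d2' d3')). split.
      { apply Rmin_pos; [|apply Rmin_pos]; assumption. }
      intros y Hy.
      assert (Hy1 : Rabs (y - t0) < d1') by (eapply Rlt_le_trans; [exact Hy| apply Rmin_l]).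
      assert (Hy2 : Rabs (y - t0) < d2') by (eapply Rlt_le_trans; [exact Hy| eapply Rle_trans; [apply Rmin_r| apply Rmin_l]]).
      assert (Hy3 : Rabs (y - t0) < d3') by (eapply Rlt_le_trans; [exact Hy| eapply Rle_trans; [apply Rmin_r| apply Rmin_r]]).
      specialize (Hdd1 y Hy1). specialize (Hdd2 y Hy2). specialize (Hdd3 y Hy3).
      apply Rabs_def2 in Hdd1. apply Rabs_def2 in Hdd2. apply Rabs_def2 in Hdd3.
      unfold theta.
      destruct (Rle_or_lt (IZR k) (h y)) as [Hk|Hk].
      * rewrite (floor_uniq (h y) k) by lra. reflexivity.
      * rewrite (floor_uniq (h y) (k - 1)) by (rewrite minus_IZR; simpl; lra).
        replace k with (k - 1 + 1)%Z at 1 by lia.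
        symmetry. apply (ang_agree V HV p0 Hp0).
        -- lra.
        -- replace (k - 1 + 1)%Z with k by lia. lra.
    + destruct (Hgc t0) as [C1 C2]. apply ang_cont; [exact C1| exact C2|]. lra.
Qed.

Lemma d1_per t : Defs.d1 g (t + 2 * PI) = Defs.d1 g t.
Proof.
  unfold Defs.d1. apply (deriv_per (fun s => fst (g s))).
  - intros s. rewrite Hgp. reflexivity.
  - apply Hgd.
Qed.
Lemma d2_per t : Defs.d2 g (t + 2 * PI) = Defs.d2 g t.
Proof.
  unfold Defs.d2. apply (deriv_per (fun s => snd (g s))).
  - intros s. rewrite Hgp. reflexivity.
  - apply Hgd.
Qed.

Lemma theta_per t : theta (t + 2 * PI) = theta t + 2 * PI * IZR (wG V).
Proof.
  unfold theta. rewrite d1_per, d2_per, Hhp.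
  rewrite (floor_uniq (h t + INR (length V)) (Int_part (h t) + Z.of_nat (length V))).
  - apply (ang_per V HV p0 Hp0).
  - pose proof (floor_spec (h t)). rewrite plus_IZR, <- INR_IZR_INZ. lra.
Qed.

End Theta.


Lemma phase_alg (w y z x a b rA rB : R) : 0 < rA -> 0 < rB ->
  cos a * rA = w -> sin a * rA = y -> cos b * rB = z -> sin b * rB = x ->
  let d := Cminus (Cmult (0, 0) (0, 0)) (Cmult (w, y) (z, x)) in
  let d2 := Cmult d d in
  (fst d2 / Cmod d ^ 2, snd d2 / Cmod d ^ 2) = (cos (2 * b + 2 * a), sin (2 * b + 2 * a)).
Proof.
  intros HA HB E1 E2 E3 E4 d d2.
  subst w y z x.
  assert (Ha : cos a * cos a + sin a * sin a = 1) by (pose proof (sin2_cos2 a); unfold Rsqr in *; lra).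
  assert (Hb : cos b * cos b + sin b * sin b = 1) by (pose proof (sin2_cos2 b); unfold Rsqr in *; lra).
  assert (Hm : Cmod d ^ 2 = rA ^ 2 * rB ^ 2).
  { unfold Cmod. rewrite pow2_sqrt.
    2: { apply Rplus_le_le_0_compat; apply pow2_ge_0. }
    unfold d; simpl.
    transitivity (rA ^ 2 * rB ^ 2 * (cos a * cos a + sin a * sin a) * (cos b * cos b + sin b * sin b)).
    - unfold Cminus, Cplus, Copp, Cmult; simpl. ring.
    - rewrite Ha, Hb. ring. }
  rewrite Hm. unfold d2, d. unfold Cminus, Cplus, Copp, Cmult; simpl.
  rewrite cos_plus, sin_plus, !cos_2a, !sin_2a.
  f_equal; field; split; lra.
Qed.

Lemma lift_exists V g : good_edges V -> smoothing V g ->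
  exists th : R -> R, (forall t, continuous th t) /\
    (forall t, cos (th t) * sqrt (Defs.d1 g t * Defs.d1 g t + Defs.d2 g t * Defs.d2 g t) = Defs.d1 g t /\
               sin (th t) * sqrt (Defs.d1 g t * Defs.d1 g t + Defs.d2 g t * Defs.d2 g t) = Defs.d2 g t) /\
    (forall t, th (t + 2 * PI) = th t + 2 * PI * IZR (wG V)).
Proof.
  intros HV [Hgp [Hgd [Hgc [Hnz [[h [eps [Heps [Hhc [Hmono [Hhp [_ [_ Hdir]]]]]]]] _]]]]].
  destruct (phi0_ex V HV) as [p0 [c [Hc [H1 H2]]]].
  assert (Hp0 : exists c, 0 < c /\ fst (edgeR V 0) = c * cos p0 /\ snd (edgeR V 0) = c * sin p0)
    by (exists c; auto).
  exists (theta V p0 g h). split; [|split].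
  - intros t. apply (theta_cont V HV p0 Hp0 g h Hhc Hdir Hgc).
  - intros t. apply (theta_lift V HV p0 Hp0 g h Hdir).
  - intros t. apply (theta_per V HV p0 Hp0 g h Hhp Hgp Hgd).
Qed.

Lemma lift_iter (th : R -> R) (w : Z) : (forall t, th (t + 2 * PI) = th t + 2 * PI * IZR w) ->
  forall x (p : Z), th (x + 2 * PI * IZR p) = th x + 2 * PI * IZR p * IZR w.
Proof.
  intros Hp x p. induction p using Z_bi_ind.
  - simpl. rewrite !Rmult_0_r, Rplus_0_r, Rmult_0_l, Rplus_0_r. reflexivity.
  - rewrite plus_IZR. replace (x + 2 * PI * (IZR p + 1)) with ((x + 2 * PI * IZR p) + 2 * PI) by ring.
    rewrite Hp, IHp. ring.
  - rewrite plus_IZR in IHp. replace (x + 2 * PI * (IZR p + 1)) with ((x + 2 * PI * IZR p) + 2 * PI) in IHp by ring.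
    rewrite Hp in IHp. lra.
Qed.

Lemma phase_torus gzx gwy (thB thA : R -> R) s u :
  (cos (thB s) * sqrt (Defs.d1 gzx s * Defs.d1 gzx s + Defs.d2 gzx s * Defs.d2 gzx s) = Defs.d1 gzx s /\
   sin (thB s) * sqrt (Defs.d1 gzx s * Defs.d1 gzx s + Defs.d2 gzx s * Defs.d2 gzx s) = Defs.d2 gzx s) ->
  (cos (thA u) * sqrt (Defs.d1 gwy u * Defs.d1 gwy u + Defs.d2 gwy u * Defs.d2 gwy u) = Defs.d1 gwy u /\
   sin (thA u) * sqrt (Defs.d1 gwy u * Defs.d1 gwy u + Defs.d2 gwy u * Defs.d2 gwy u) = Defs.d2 gwy u) ->
  (Defs.d1 gzx s, Defs.d2 gzx s) <> (0, 0) -> (Defs.d1 gwy u, Defs.d2 gwy u) <> (0, 0) ->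
  lag_phase (torus_imm gzx gwy) (s, u) = (cos (2 * thB s + 2 * thA u), sin (2 * thB s + 2 * thA u)).
Proof.
  intros [B1 B2] [A1 A2] NB NA.
  unfold lag_phase, partial_s, partial_u, cw_of, cz_of, torus_imm.
  cbn [cw cx cy cz fst snd].
  rewrite !Derive_const.
  change (Derive (fun s' => snd (gzx s')) s) with (Defs.d2 gzx s).
  change (Derive (fun s' => fst (gzx s')) s) with (Defs.d1 gzx s).
  change (Derive (fun s' => snd (gwy s')) u) with (Defs.d2 gwy u).
  change (Derive (fun s' => fst (gwy s')) u) with (Defs.d1 gwy u).
  assert (PB : 0 < sqrt (Defs.d1 gzx s * Defs.d1 gzx s + Defs.d2 gzx s * Defs.d2 gzx s)).
  { apply sqrt_lt_R0. destruct (Req_dec (Defs.d1 gzx s) 0) as [E|E];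
    [destruct (Req_dec (Defs.d2 gzx s) 0) as [E'|E']; [exfalso; apply NB; rewrite E, E'; reflexivity| nra] | nra]. }
  assert (PA : 0 < sqrt (Defs.d1 gwy u * Defs.d1 gwy u + Defs.d2 gwy u * Defs.d2 gwy u)).
  { apply sqrt_lt_R0. destruct (Req_dec (Defs.d1 gwy u) 0) as [E|E];
    [destruct (Req_dec (Defs.d2 gwy u) 0) as [E'|E']; [exfalso; apply NA; rewrite E, E'; reflexivity| nra] | nra]. }
  exact (phase_alg _ _ _ _ (thA u) (thB s) _ _ PA PB A1 A2 B1 B2).
Qed.
Lemma cR_pair (f g : R -> R) x : continuous f x -> continuous g x -> continuous (fun t => (f t, g t)) x.
Proof.
  intros Hf Hg. apply (continuous_comp_2 f g pair); auto.
  apply (continuous_ext (fun z : R * R => z)). intros [a b]; reflexivity. apply continuous_id.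
Qed.
Lemma cR_fst (c : R -> R * R) x : continuous c x -> continuous (fun t => fst (c t)) x.
Proof.
  intros H. apply (continuous_comp c fst); auto. rewrite (surjective_pairing (c x)). apply continuous_fst.
Qed.
Lemma cR_snd (c : R -> R * R) x : continuous c x -> continuous (fun t => snd (c t)) x.
Proof.
  intros H. apply (continuous_comp c snd); auto. rewrite (surjective_pairing (c x)). apply continuous_snd.
Qed.

Theorem corollary1p2 (n : nat) (qs : list quad) (gzx gwy : R -> R * R) :
  lagrangian_hypercube n qs ->
  smoothing (poly_zx qs) gzx ->
  smoothing (poly_wy qs) gwy ->
  is_maslov_number (torus_imm gzx gwy)
    (2 * Z.gcd (wG (poly_zx qs)) (wG (poly_wy qs)))%Z.
Proof.
  intros [Hc _] Szx Swy.
  pose proof (good_zx qs Hc) as Gzx. pose proof (good_wy qs Hc) as Gwy.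
  destruct (lift_exists _ _ Gzx Szx) as [thB [CB [LB PB]]].
  destruct (lift_exists _ _ Gwy Swy) as [thA [CA [LA PA]]].
  pose proof (proj1 (proj2 (proj2 (proj2 Szx)))) as NB.
  pose proof (proj1 (proj2 (proj2 (proj2 Swy)))) as NA.
  set (wB := wG (poly_zx qs)) in *. set (wA := wG (poly_wy qs)) in *.
  pose proof PI_RGT_0 as Hpi.
  assert (Hph : forall p : R * R, lag_phase (torus_imm gzx gwy) p =
     (cos (2 * thB (fst p) + 2 * thA (snd p)), sin (2 * thB (fst p) + 2 * thA (snd p)))).
  { intros [s u]. apply phase_torus; auto. }
  assert (Hpsi : forall c : R -> R * R, (forall t, continuous c t) ->
     forall t, continuous (fun t => 2 * thB (fst (c t)) + 2 * thA (snd (c t))) t).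
  { intros c Hcc t. apply cR_plus; apply cR_mult; try apply continuous_const.
    - apply (continuous_comp (fun t => fst (c t)) thB); [apply cR_fst, Hcc| apply CB].
    - apply (continuous_comp (fun t => snd (c t)) thA); [apply cR_snd, Hcc| apply CA]. }
  assert (Hidx : forall c m, torus_loop c -> maslov_index (torus_imm gzx gwy) c m ->
     exists p q : Z, m = (2 * (p * wB + q * wA))%Z).
  { intros c m [Hcc [p [q Hc1]]] [phi [Hphi [Hphase Hm]]].
    exists p, q.
    set (psi := fun t => 2 * thB (fst (c t)) + 2 * thA (snd (c t))).
    assert (H01 : (fun t => phi t - psi t) 1 = (fun t => phi t - psi t) 0).
    { apply (const_2pi (fun t => phi t - psi t)).
      - intros t. apply cR_minus; [apply Hphi| apply Hpsi, Hcc].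
      - intros t Ht. specialize (Hphase t Ht). rewrite Hph in Hphase.
        injection Hphase as E1 E2.
        destruct (trig_uniq (phi t) (psi t)) as [j Hj]; [unfold psi; rewrite E1; reflexivity| unfold psi; rewrite E2; reflexivity|].
        exists j. exact Hj. }
    simpl in H01. unfold psi in H01. rewrite Hc1 in H01. simpl in H01.
    rewrite (lift_iter thB wB PB), (lift_iter thA wA PA) in H01.
    apply eq_IZR. rewrite mult_IZR, plus_IZR, !mult_IZR.
    apply Rmult_eq_reg_l with (2 * PI); [|lra].
    rewrite <- Hm. simpl (IZR 2). lra. }
  set (G := Z.gcd wB wA).
  destruct (Z.eq_dec G 0) as [HG|HG].
  - right. split; [lia|].
    intros c m Hl Hm. destruct (Hidx c m Hl Hm) as [p [q E]].
    apply Z.gcd_eq_0 in HG. destruct HG as [H1 H2]. rewrite H1, H2 in E. lia.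
  - left. pose proof (Z.gcd_nonneg wB wA). fold G in H.
    split; [lia|]. split.
    + destruct (Z.gcd_bezout wB wA G eq_refl) as [a [b Hab]].
      set (c := fun t : R => (2 * PI * IZR a * t, 2 * PI * IZR b * t)).
      assert (Hcc : forall t, continuous c t).
      { intros t. unfold c. apply cR_pair; apply cR_mult; try apply continuous_const; apply continuous_id. }
      exists c. split.
      * split; [exact Hcc|]. exists a, b. unfold c; simpl. f_equal; ring.
      * exists (fun t => 2 * thB (fst (c t)) + 2 * thA (snd (c t))). split; [|split].
        -- apply Hpsi, Hcc.
        -- intros t _. apply Hph.
        -- unfold c; cbn [fst snd].
           replace (2 * PI * IZR a * 1) with (0 + 2 * PI * IZR a) by ring.
           replace (2 * PI * IZR b * 1) with (0 + 2 * PI * IZR b) by ring.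
           rewrite !Rmult_0_r.
           rewrite (lift_iter thB wB PB), (lift_iter thA wA PA).
           rewrite <- Hab, mult_IZR, plus_IZR, !mult_IZR. simpl (IZR 2). ring.
    + intros c m Hl Hm Hpos. destruct (Hidx c m Hl Hm) as [p [q E]].
      assert (Hd : (G | p * wB + q * wA)%Z).
      { apply Z.divide_add_r; apply Z.divide_mul_r; [apply Z.gcd_divide_l| apply Z.gcd_divide_r]. }
      apply Z.divide_pos_le in Hd; lia.
Qed.
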